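(* Let $k\geqslant 2$ be an integer, and in $B_5$ let $\delta_3=\sigma_2\sigma_1$, $\tilde\delta_3=\sigma_1\sigma_2$, $\Delta_3=\sigma_2\sigma_1\sigma_2$ and \[\beta'_k=(\sigma_1\sigma_3)^{2k-2}(\sigma_3\sigma_4\Delta_3)(\Delta_3\sigma_4)\big[(\delta_3\sigma_4)(\tilde\delta_3\sigma_4)\big]^{k-1}(\delta_3\sigma_4\sigma_3\sigma_4).\] Then $\beta'_k$ is not periodic, i.e. there are no nonzero integers $m,l$ with $(\beta'_k)^m=\Delta^l$.
   Context: $B_5$ is the 5-strand braid group with standard generators $\sigma_1,\dots,\sigma_4$, and $\Delta=(\sigma_1\sigma_2\sigma_3\sigma_4)(\sigma_1\sigma_2\sigma_3)(\sigma_1\sigma_2)\sigma_1$. *)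

(* Defs.v *)
(* The braid group B_5 is modelled by its standard Artin
   presentation: braid words (lists of signed generators sigma_1..sigma_4)
   modulo the congruence generated by free cancellation and the braid
   relations. *)
From Stdlib Require Import List ZArith.
Import ListNotations.

Inductive gen : Set := s1 | s2 | s3 | s4.

(* a letter: generator together with an exponent sign (true = +1, false = -1) *)
Definition letter : Set := (gen * bool)%type.
Definition word : Set := list letter.

Definition idx (g : gen) : nat :=
  match g with s1 => 1 | s2 => 2 | s3 => 3 | s4 => 4 end.

Definition far (g h : gen) : Prop := idx g + 2 <= idx h \/ idx h + 2 <= idx g.
Definition adj (g h : gen) : Prop := idx h = S (idx g) \/ idx g = S (idx h).

Definition sg (g : gen) : word := [(g, true)].

Inductive braid_eq : word -> word -> Prop :=
| be_refl : forall u, braid_eq u u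
| be_sym : forall u v, braid_eq u v -> braid_eq v u
| be_trans : forall u v w, braid_eq u v -> braid_eq v w -> braid_eq u w
| be_cat : forall u u' v v', braid_eq u u' -> braid_eq v v' ->
    braid_eq (u ++ v) (u' ++ v')
| be_free : forall g b, braid_eq [(g, b); (g, negb b)] []
| be_comm : forall g h, far g h -> braid_eq (sg g ++ sg h) (sg h ++ sg g)
| be_braid : forall g h, adj g h ->
    braid_eq (sg g ++ sg h ++ sg g) (sg h ++ sg g ++ sg h).

Definition winv (w : word) : word :=
  rev (map (fun x => (fst x, negb (snd x))) w).

Fixpoint wrep (n : nat) (w : word) : word :=
  match n with O => [] | S n' => w ++ wrep n' w end.

Definition wpow (w : word) (m : Z) : word :=
  match m with
  | Z0 => []
  | Zpos p => wrep (Pos.to_nat p) w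
  | Zneg p => wrep (Pos.to_nat p) (winv w)
  end.

Definition Delta : word :=
  sg s1 ++ sg s2 ++ sg s3 ++ sg s4 ++ sg s1 ++ sg s2 ++ sg s3 ++
  sg s1 ++ sg s2 ++ sg s1.

Definition delta3 : word := sg s2 ++ sg s1.
Definition delta3t : word := sg s1 ++ sg s2.
Definition Delta3 : word := sg s2 ++ sg s1 ++ sg s2.

Definition beta' (k : nat) : word :=
  wrep (2 * k - 2) (sg s1 ++ sg s3)
  ++ (sg s3 ++ sg s4 ++ Delta3)
  ++ (Delta3 ++ sg s4)
  ++ wrep (k - 1) ((delta3 ++ sg s4) ++ (delta3t ++ sg s4))
  ++ (delta3 ++ sg s4 ++ sg s3 ++ sg s4).

(* Main.v *)
Require Import Defs.
From Stdlib Require Import List ZArith Lia.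
Import ListNotations.

Record St := mk { p1 : nat; p2 : nat; p3 : nat; p4 : nat; p5 : nat; acc : Z }.

Definition sgnz (b : bool) (v : Z) : Z := if b then v else (- v)%Z.

Definition step (h : nat -> nat -> Z) (x : letter) (s : St) : St :=
  let '(g, b) := x in
  match g with
  | s1 => mk (p2 s) (p1 s) (p3 s) (p4 s) (p5 s) (acc s + sgnz b (h (p1 s) (p2 s)))
  | s2 => mk (p1 s) (p3 s) (p2 s) (p4 s) (p5 s) (acc s + sgnz b (h (p2 s) (p3 s)))
  | s3 => mk (p1 s) (p2 s) (p4 s) (p3 s) (p5 s) (acc s + sgnz b (h (p3 s) (p4 s)))
  | s4 => mk (p1 s) (p2 s) (p3 s) (p5 s) (p4 s) (acc s + sgnz b (h (p4 s) (p5 s)))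
  end.

Fixpoint run h (w : word) (s : St) : St :=
  match w with [] => s | x :: w' => run h w' (step h x s) end.

Lemma run_app h u v s : run h (u ++ v) s = run h v (run h u s).
Proof. revert s; induction u; simpl; auto. Qed.

Definition addacc (d : Z) (s : St) : St :=
  mk (p1 s) (p2 s) (p3 s) (p4 s) (p5 s) (acc s + d).

Lemma addacc_addacc d e s : addacc d (addacc e s) = addacc (e + d) s.
Proof. destruct s; unfold addacc; simpl; f_equal; ring. Qed.

Lemma step_shift h x d s : step h x (addacc d s) = addacc d (step h x s).
Proof. destruct x as [g b]; destruct g, s; unfold addacc; simpl; f_equal; ring. Qed.

Lemma run_shift h w d s : run h w (addacc d s) = addacc d (run h w s).
Proof. revert s; induction w; simpl; intros; auto. rewrite step_shift; auto. Qed.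

Lemma braid_inv h (hs : forall x y, h x y = h y x) u v :
  braid_eq u v -> forall s, run h u s = run h v s.
Proof.
  induction 1; intros s; auto.
  - rewrite IHbraid_eq1; apply IHbraid_eq2.
  - rewrite !run_app, IHbraid_eq1, IHbraid_eq2; auto.
  - destruct g, b, s as [a1 a2 a3 a4 a5 z]; simpl; unfold sgnz; f_equal;
      try rewrite (hs a2 a1); try rewrite (hs a3 a2); try rewrite (hs a4 a3);
      try rewrite (hs a5 a4); ring.
  - unfold far in H; destruct g, h0; simpl in H; try lia; destruct s; simpl;
      unfold sgnz; f_equal; ring.
  - unfold adj in H; destruct g, h0; simpl in H; try lia; destruct s; simpl;
      unfold sgnz; f_equal; ring.
Qed.

Definition winv_l (x : letter) : letter := (fst x, negb (snd x)).

Lemma step_cancel h (hs : forall x y, h x y = h y x) x s : step h (winv_l x) (step h x s) = s.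
Proof. destruct x as [g b]; destruct g, b, s as [a1 a2 a3 a4 a5 z]; simpl; unfold sgnz; f_equal;
  try rewrite (hs a2 a1); try rewrite (hs a3 a2); try rewrite (hs a4 a3);
      try rewrite (hs a5 a4); ring. Qed.

Lemma run_winv h (hs : forall x y, h x y = h y x) w s : run h (winv w) (run h w s) = s.
Proof.
  revert s; induction w as [|x w IH]; intros s; simpl; auto.
  unfold winv; simpl. rewrite run_app. fold (winv w). rewrite IH.
  simpl. apply step_cancel; auto.
Qed.

Definition relab (f : nat -> nat) (s : St) : St :=
  mk (f (p1 s)) (f (p2 s)) (f (p3 s)) (f (p4 s)) (f (p5 s)) (acc s).

Lemma run_relab h f w s :
  run h w (relab f s) = relab f (run (fun x y => h (f x) (f y)) w s).
Proof.
  revert s; induction w as [|x w IH]; intros s; simpl; auto.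
  rewrite <- IH. f_equal. destruct x as [g b]; destruct g, s; reflexivity.
Qed.

Lemma run_ext h1 h2 w s : (forall x y, h1 x y = h2 x y) -> run h1 w s = run h2 w s.
Proof.
  intros E; revert s; induction w as [|x w IH]; intros s; simpl; auto.
  rewrite IH. f_equal. destruct x as [g b]; destruct g, s; simpl; rewrite E; auto.
Qed.

Lemma addacc0 s : addacc 0 s = s.
Proof. destruct s; unfold addacc; simpl; f_equal; ring. Qed.

Section Pow.
Variable h : nat -> nat -> Z.
Hypothesis hs : forall x y, h x y = h y x.
Variable w : word.
Variable c : Z.
Variable P : St -> Prop.
Variable T : St -> St.
Hypothesis HR : forall s, P s -> run h w s = addacc c (T s).
Hypothesis HT : forall s, P s -> P (T s).
Hypothesis HPre : forall s, P s -> exists s', P s' /\ T s' = s.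
Hypothesis HTa : forall s, acc (T s) = acc s.

Lemma rep_pos n : forall s, P s -> exists s', P s' /\ acc s' = acc s /\
  run h (wrep n w) s = addacc (Z.of_nat n * c) s'.
Proof.
  induction n as [|n IH]; intros s Ps; cbn [wrep].
  - exists s; repeat split; auto. replace (Z.of_nat 0 * c)%Z with 0%Z by lia; rewrite addacc0; auto.
  - rewrite run_app, HR by auto. rewrite run_shift.
    destruct (IH (T s) (HT s Ps)) as [s' [P' [A' E']]].
    exists s'; repeat split; auto. rewrite A', HTa; auto.
    rewrite E', addacc_addacc. f_equal. lia.
Qed.

Lemma rep_neg n : forall s, P s -> exists s', P s' /\ acc s' = acc s /\
  run h (wrep n (winv w)) s = addacc (- (Z.of_nat n * c)) s'.
Proof.
  induction n as [|n IH]; intros s Ps; cbn [wrep].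
  - exists s; repeat split; auto. replace (- (Z.of_nat 0 * c))%Z with 0%Z by lia; rewrite addacc0; auto.
  - destruct (HPre s Ps) as [s1 [P1 E1]].
    assert (E : run h w (addacc (- c) s1) = s).
    { rewrite run_shift, HR, addacc_addacc, E1 by auto.
      replace (c + - c)%Z with 0%Z by ring. apply addacc0. }
    assert (E2 : run h (winv w) s = addacc (- c) s1).
    { transitivity (run h (winv w) (run h w (addacc (- c) s1))).
      - rewrite E; reflexivity.
      - apply run_winv; auto. }
    rewrite run_app, E2.
    rewrite run_shift.
    destruct (IH s1 P1) as [s' [P' [A' E']]].
    exists s'; repeat split; auto. rewrite A', <- E1, HTa; auto.
    rewrite E', addacc_addacc. f_equal. lia.
Qed.

Lemma pow_gen m s : P s -> exists s', P s' /\ acc s' = acc s /\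
  run h (wpow w m) s = addacc (m * c) s'.
Proof.
  intros Ps; destruct m as [|p|p]; cbn [wpow].
  - exists s; repeat split; auto. rewrite Z.mul_0_l, addacc0; auto.
  - destruct (rep_pos (Pos.to_nat p) s Ps) as [s' H]; exists s'.
    rewrite positive_nat_Z in H; exact H.
  - destruct (rep_neg (Pos.to_nat p) s Ps) as [s' H]; exists s'.
    rewrite positive_nat_Z in H. replace (Z.neg p * c)%Z with (- (Z.pos p * c))%Z by lia.
    exact H.
Qed.
End Pow.

Definition s0 : St := mk 1 2 3 4 5 0.
Definition s0r : St := mk 5 4 3 2 1 0.
Definition revst (s : St) : St := mk (p5 s) (p4 s) (p3 s) (p2 s) (p1 s) (acc s).

Lemma delta_gen h (hs : forall x y, h x y = h y x) H :
  run h Delta s0 = addacc H s0r -> run h Delta s0r = addacc H s0 ->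
  forall l, exists s', acc s' = 0%Z /\ run h (wpow Delta l) s0 = addacc (l * H) s'.
Proof.
  intros E1 E2 l.
  set (P := fun s => exists a, s = addacc a s0 \/ s = addacc a s0r).
  destruct (pow_gen h hs Delta H P revst) with (m := l) (s := s0)
    as [s' [_ [A' E']]].
  - intros s [a [-> | ->]]; rewrite run_shift; [rewrite E1 | rewrite E2];
      unfold addacc, revst; simpl; f_equal; ring.
  - intros s [a [-> | ->]]; exists a; [right | left];
      unfold addacc, revst; simpl; reflexivity.
  - intros s [a [-> | ->]]; [exists (addacc a s0r) | exists (addacc a s0)]; split;
      try reflexivity; exists a; [right | left]; reflexivity.
  - intros s; reflexivity.
  - exists 0%Z; left; unfold addacc, s0; simpl; reflexivity.
  - exists s'; split; auto.
Qed.

Definition fperm (x : nat) : nat :=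
  match x with 1 => 4 | 2 => 1 | 3 => 5 | 4 => 3 | 5 => 2 | _ => x end.
Definition gperm (x : nat) : nat :=
  match x with 4 => 1 | 1 => 2 | 5 => 3 | 3 => 4 | 2 => 5 | _ => x end.

Lemma gf x : gperm (fperm x) = x.
Proof. do 6 (destruct x as [|x]; [reflexivity|]); reflexivity. Qed.
Lemma fg x : fperm (gperm x) = x.
Proof. do 6 (destruct x as [|x]; [reflexivity|]); reflexivity. Qed.

Lemma relab_addacc f d s : relab f (addacc d s) = addacc d (relab f s).
Proof. reflexivity. Qed.

Lemma relab_gf s : relab gperm (relab fperm s) = s.
Proof. destruct s; unfold relab; simpl; rewrite !gf; reflexivity. Qed.
Lemma relab_fg s : relab fperm (relab gperm s) = s.
Proof. destruct s; unfold relab; simpl; rewrite !fg; reflexivity. Qed.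

Lemma beta_gen h (hs : forall x y, h x y = h y x)
  (hf : forall x y, h (fperm x) (fperm y) = h x y)
  (hg : forall x y, h (gperm x) (gperm y) = h x y) w c :
  run h w s0 = addacc c (relab fperm s0) ->
  forall m, exists s', acc s' = 0%Z /\ run h (wpow w m) s0 = addacc (m * c) s'.
Proof.
  intros E0 m.
  set (P := fun s => run h w s = addacc c (relab fperm s)).
  destruct (pow_gen h hs w c P (relab fperm)) with (m := m) (s := s0)
    as [s' [_ [A' E']]]; auto.
  - intros s Ps; unfold P in *. rewrite run_relab.
    rewrite (run_ext _ h) by auto. rewrite Ps. reflexivity.
  - intros s Ps; exists (relab gperm s); split.
    + unfold P in *. rewrite run_relab. rewrite (run_ext _ h) by auto.
      rewrite Ps, relab_addacc, relab_gf, relab_fg. reflexivity.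
    + apply relab_fg.
  - exists s'; split; auto.
Qed.

Definition wA : word := sg s1 ++ sg s3.
Definition wB1 : word := sg s3 ++ sg s4 ++ Delta3.
Definition wB2 : word := Delta3 ++ sg s4.
Definition wC : word := (delta3 ++ sg s4) ++ (delta3t ++ sg s4).
Definition wD : word := delta3 ++ sg s4 ++ sg s3 ++ sg s4.

Lemma wrep2 n (X : word) : wrep (2 * n) X = wrep n (X ++ X).
Proof.
  induction n as [|n IH]; auto.
  replace (2 * S n) with (S (S (2 * n))) by lia. cbn [wrep]. rewrite IH, app_assoc; auto.
Qed.

Lemma run_wrep_pure h X s d n : run h X s = addacc d s ->
  run h (wrep n X) s = addacc (Z.of_nat n * d) s.
Proof.
  intros E; induction n as [|n IH]; cbn [wrep].
  - replace (Z.of_nat 0 * d)%Z with 0%Z by lia; rewrite addacc0; auto.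
  - rewrite run_app, E, run_shift, IH, addacc_addacc. f_equal; lia.
Qed.

Lemma beta_run h j dA dC :
  run h (wA ++ wA) s0 = addacc dA s0 ->
  run h wC (run h wB2 (run h wB1 s0)) = addacc dC (run h wB2 (run h wB1 s0)) ->
  run h (beta' (S (S j))) s0 =
  addacc (Z.of_nat (S j) * dA) (addacc (Z.of_nat (S j) * dC)
    (run h wD (run h wB2 (run h wB1 s0)))).
Proof.
  intros HA HC.
  change (beta' (S (S j))) with
    (wrep (2 * S (S j) - 2) wA ++ wB1 ++ wB2 ++ wrep (S (S j) - 1) wC ++ wD).
  replace (2 * S (S j) - 2) with (2 * S j) by lia.
  replace (S (S j) - 1) with (S j) by lia.
  rewrite wrep2, !run_app, (run_wrep_pure _ _ _ _ _ HA), !run_shift.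
  rewrite (run_wrep_pure _ _ _ _ _ HC), !run_shift. reflexivity.
Qed.

Definition h1 (x y : nat) : Z := 1%Z.
Definition edge (x y : nat) : bool :=
  match x, y with
  | 1, 4 | 4, 1 | 4, 3 | 3, 4 | 3, 5 | 5, 3 | 5, 2 | 2, 5 | 2, 1 | 1, 2 => true
  | _, _ => false
  end.
Definition h2 (x y : nat) : Z := if edge x y then 1%Z else 0%Z.

Lemma h2s x y : h2 x y = h2 y x.
Proof.
  do 6 (destruct x as [|x]; [do 6 (destruct y as [|y]; [reflexivity|]); reflexivity|]);
  do 6 (destruct y as [|y]; [reflexivity|]); reflexivity.
Qed.
Lemma h2f x y : h2 (fperm x) (fperm y) = h2 x y.
Proof.
  do 6 (destruct x as [|x]; [do 6 (destruct y as [|y]; [reflexivity|]); reflexivity|]);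
  do 6 (destruct y as [|y]; [reflexivity|]); reflexivity.
Qed.
Lemma h2g x y : h2 (gperm x) (gperm y) = h2 x y.
Proof.
  do 6 (destruct x as [|x]; [do 6 (destruct y as [|y]; [reflexivity|]); reflexivity|]);
  do 6 (destruct y as [|y]; [reflexivity|]); reflexivity.
Qed.

Lemma beta_h1 j : run h1 (beta' (S (S j))) s0 =
  addacc (10 * Z.of_nat j + 24) (relab fperm s0).
Proof.
  rewrite (beta_run h1 j 4 6) by (vm_compute; reflexivity).
  replace (run h1 wD (run h1 wB2 (run h1 wB1 s0))) with (mk 4 1 5 3 2 14)
    by (vm_compute; reflexivity).
  unfold addacc, relab; unfold s0; cbn [p1 p2 p3 p4 p5 acc]; f_equal; lia.
Qed.

Lemma beta_h2 j : run h2 (beta' (S (S j))) s0 =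
  addacc (8 * Z.of_nat j + 18) (relab fperm s0).
Proof.
  rewrite (beta_run h2 j 4 4) by (vm_compute; reflexivity).
  replace (run h2 wD (run h2 wB2 (run h2 wB1 s0))) with (mk 4 1 5 3 2 10)
    by (vm_compute; reflexivity).
  unfold addacc, relab; unfold s0; cbn [p1 p2 p3 p4 p5 acc]; f_equal; lia.
Qed.

Lemma h1s x y : h1 x y = h1 y x.
Proof. reflexivity. Qed.

Theorem mainTheorem6 (k : nat) (hk : 2 <= k) :
  ~ (exists m l : Z, m <> 0%Z /\ l <> 0%Z /\
       braid_eq (wpow (beta' k) m) (wpow Delta l)).
Proof.
  intros [m [l [Hm [Hl HB]]]].
  destruct k as [|[|j]]; [lia|lia|].
  destruct (beta_gen h1 h1s (fun _ _ => eq_refl) (fun _ _ => eq_refl) _ _ (beta_h1 j) m)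
    as [b1 [Ab1 Eb1]].
  destruct (beta_gen h2 h2s h2f h2g _ _ (beta_h2 j) m) as [b2 [Ab2 Eb2]].
  destruct (delta_gen h1 h1s 10 ltac:(vm_compute; reflexivity)
    ltac:(vm_compute; reflexivity) l) as [d1 [Ad1 Ed1]].
  destruct (delta_gen h2 h2s 5 ltac:(vm_compute; reflexivity)
    ltac:(vm_compute; reflexivity) l) as [d2 [Ad2 Ed2]].
  pose proof (braid_inv h1 h1s _ _ HB s0) as X1.
  pose proof (braid_inv h2 h2s _ _ HB s0) as X2.
  rewrite Eb1, Ed1 in X1. rewrite Eb2, Ed2 in X2.
  apply (f_equal acc) in X1. apply (f_equal acc) in X2.
  unfold addacc in X1, X2; cbn [acc] in X1, X2.
  rewrite Ab1, Ad1 in X1. rewrite Ab2, Ad2 in X2.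
  nia.
Qed.
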